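(* Consider the blown-up Brusselator problem described in the context, with fixed $a,d_1,d_2>0$ and $n\ge1$. Let $A(\bar{\mathbf x},\bar t)\in\mathbb C$ be smooth, $\boldsymbol\varphi=(1,-1+ia^{-1})^\top$, $\boldsymbol\varphi^*=\tfrac12(1-ia,-ia)^\top$, and $$\boldsymbol\psi^{(0)}=A(\bar{\mathbf x},\bar t)\boldsymbol\varphi e^{iat}+\overline{A}\,\overline{\boldsymbol\varphi}e^{-iat}.$$ Let $\boldsymbol\psi^{(1)}$ be any $2\pi/a$-periodic-in-$t$ solution of $$(\partial_t-M)\boldsymbol\psi^{(1)}=\Big(\tfrac{1+a^2}{a}(\psi_1^{(0)})^2+2a\psi_1^{(0)}\psi_2^{(0)}\Big)\begin{pmatrix}1\\-1\end{pmatrix},\qquad M=\begin{pmatrix}a^2&a^2\\-(1+a^2)&-a^2\end{pmatrix},$$ and let $\mathbf B^{(2)}$ be the order-$r^2$ term of the blown-up equation, $$\mathbf B^{(2)}=-(\partial_{\bar t}+r^{-1}\partial_{\bar t}r)\boldsymbol\psi^{(0)}+\mathrm{diag}(d_1,d_2)\Delta_{\bar{\mathbf x}}\boldsymbol\psi^{(0)}+\Big((1+a^2)\bar\mu\psi_1^{(0)}+\tfrac{2(1+a^2)}{a}\psi_1^{(0)}\psi_1^{(1)}+2a(\psi_1^{(0)}\psi_2^{(1)}+\psi_1^{(1)}\psi_2^{(0)})+(\psi_1^{(0)})^2\psi_2^{(0)}\Big)\begin{pmatrix}1\\-1\end{pmatrix}.$$ Writing $\mathbf B^{(2)}=\sum_{k\in\mathbb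 Z}\mathbf B^{(2,k)}(\bar{\mathbf x},\bar t)e^{ikat}$, the solvability condition $\boldsymbol\varphi^*\cdot\mathbf B^{(2,1)}\equiv0$ holds if and only if $$\partial_{\bar t}A=c_1\Delta_{\bar{\mathbf x}}A+\big(c_2\bar\mu(\bar t)-r(\bar t)^{-1}\partial_{\bar t}r(\bar t)\big)A-c_3A|A|^2,$$ where $\Delta_{\bar{\mathbf x}}=\sum_{j=1}^n\partial_{\bar x_j}^2$ and $$c_1=\frac{d_1+d_2-ia(d_1-d_2)}{2},\quad c_2=\frac{1+a^2}{2},\quad c_3=\frac12\Big(\frac{2+a^2}{a^2}+i\,\frac{4-7a^2+4a^4}{3a^3}\Big).$$ Consequently, in charts (with $\beta=2$): $\mathcal K_1:\ \partial_{t_1}A_1=c_1\Delta_{\mathbf x_1}A_1+(-c_2+\tfrac{\varepsilon_1(t_1)}{2})A_1-c_3A_1|A_1|^2$; $\mathcal K_2:\ \partial_{t_2}A_2=c_1\Delta_{\mathbf x_2}A_2+c_2\mu_2(t_2)A_2-c_3A_2|A_2|^2$; $\mathcal K_3:\ \partial_{t_3}A_3=c_1\Delta_{\mathbf x_3}A_3+(c_2-\tfrac{\varepsilon_3(t_3)}{2})A_3-c_3A_3|A_3|^2$, with $\varepsilon_1(t_1)=\frac{2\varepsilon_1(0)}{2-4\varepsilon_1(0)t_1}$, $\mu_2(t_2)=\mu_2(0)+t_2$, $\varepsilon_3(t_3)=\frac{2\varepsilon_3(0)}{2+4\varepsilon_3(0)t_3}$.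
   Context: The dynamic Brusselator system, after translating its homogeneous steady state to the origin and setting $\mu=(b-b_c)/b_c$, $b_c=1+a^2$, is, for $\mathbf x\in\mathbb R^n$, $\partial_tu=d_1\Delta u+a^2u+a^2v+(1+a^2)u\mu+f$, $\partial_tv=d_2\Delta v-(1+a^2)u-a^2v-(1+a^2)u\mu-f-\varepsilon(1+a^2)/a$, $\dot\mu=\varepsilon$, where $f(u,v,\mu)=\frac{(1+a^2)(1+\mu)}{a}u^2+2auv+u^2v$. The blow-up (with $\beta=2$) is $(u,v)=r(\bar t)\boldsymbol\psi(t,\bar{\mathbf x},\bar t)$, $\mu=r^2\bar\mu$, $\varepsilon=r^4\bar\varepsilon$, $(\bar\mu,\bar\varepsilon)\in S^1$, with $\partial_{x_j}=r\partial_{\bar x_j}$ (the solution does not depend on the fast space variable) and $\partial_t\mapsto\partial_t+r^2\partial_{\bar t}$ (fast $t$ and slow $\bar t$ independent); $r(\bar t)>0$, $\bar\mu(\bar t)$ given, $r^{-1}\partial_{\bar t}r$ treated as order one. Expanding $\boldsymbol\psi=\sum_k\boldsymbol\psi^{(k)}r^k$ and matching powers of $r$ gives the order-$r^0$ equation $(\partial_t-M)\boldsymbol\psi^{(0)}=0$, the order-$r^1$ equation above, and $\mathbf B^{(2)}$ as the order-$r^2$ forcing. Charts: $\mathcal K_1$: $\bar\mu=-1$, $r=r_1$, $\varepsilon=r_1^4\varepsilon_1$, $\dot r_1=-\tfrac12r_1\varepsilon_1$, $\dot\varepsilon_1=2\varepsilon_1^2$; $\mathcal K_2$: $\bar\varepsilon=1$,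 $\mu=r_2^2\mu_2$, $\dot r_2=0$, $\dot\mu_2=1$; $\mathcal K_3$: $\bar\mu=1$, $\varepsilon=r_3^4\varepsilon_3$, $\dot r_3=\tfrac12r_3\varepsilon_3$, $\dot\varepsilon_3=-2\varepsilon_3^2$; $t_l,\mathbf x_l,A_l$ denote time, space and amplitude in chart $\mathcal K_l$, and $\Delta_{\mathbf x_l}$ the Laplacian in $\mathbf x_l$. *)

(* Defs.v *)
From mathcomp Require Import ssreflect ssrfun ssrbool eqtype ssrnat fintype bigop.
From Stdlib Require Import Reals.
From Coquelicot Require Import Coquelicot.

Set Implicit Arguments.
Unset Strict Implicit.

Local Open Scope R_scope.

Definition Pt (n : nat) := 'I_n -> R.

Definition upd (n : nat) (x : Pt n) (j : 'I_n) (s : R) : Pt n :=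
  fun k => if k == j then s else x k.

Inductive dir (n : nat) : Type :=
| Dx : 'I_n -> dir n
| Dt : dir n.
Arguments Dt {n}.

Definition pdR (n : nat) (d : dir n) (G : Pt n -> R -> R) : Pt n -> R -> R :=
  fun x tb => match d with
              | Dx j => Derive (fun s => G (upd x j s) tb) (x j)
              | Dt => Derive (fun s => G x s) tb
              end.

Definition exR (n : nat) (d : dir n) (G : Pt n -> R -> R) (x : Pt n) (tb : R) : Prop :=
  match d with
  | Dx j => ex_derive (fun s => G (upd x j s) tb) (x j)
  | Dt => ex_derive (fun s => G x s) tb
  end.

Fixpoint pdlR (n : nat) (l : list (dir n)) (G : Pt n -> R -> R) : Pt n -> R -> R :=
  match l with
  | nil => G
  | cons d l' => pdR d (pdlR l' G)
  end.

Definition smoothR (n : nat) (G : Pt n -> R -> R) : Prop :=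
  forall (l : list (dir n)) (d : dir n) (x : Pt n) (tb : R), exR d (pdlR l G) x tb.

Definition lapR (n : nat) (G : Pt n -> R -> R) : Pt n -> R -> R :=
  fun x tb => \big[Rplus/0]_(j < n) pdR (Dx j) (pdR (Dx j) G) x tb.

Definition ReF (n : nat) (A : Pt n -> R -> C) : Pt n -> R -> R := fun x tb => fst (A x tb).
Definition ImF (n : nat) (A : Pt n -> R -> C) : Pt n -> R -> R := fun x tb => snd (A x tb).

Definition smoothC (n : nat) (A : Pt n -> R -> C) : Prop :=
  smoothR (ReF A) /\ smoothR (ImF A).

Definition dtC (n : nat) (A : Pt n -> R -> C) (x : Pt n) (tb : R) : C :=
  (pdR Dt (ReF A) x tb, pdR Dt (ImF A) x tb).

Definition lapC (n : nat) (A : Pt n -> R -> C) (x : Pt n) (tb : R) : C :=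
  (lapR (ReF A) x tb, lapR (ImF A) x tb).

Definition expi (th : R) : C := (cos th, sin th).

(* phi = (1, -1 + i a^{-1}),  phi* = 1/2 (1 - i a, - i a) ; index true = 1st, false = 2nd *)
Definition phi (a : R) (k : bool) : C := if k then (1, 0) else (-1, / a).
Definition phistar (a : R) (k : bool) : C := if k then (/2, - a / 2) else (0, - a / 2).

(* psi^(0)_k(t, xbar, tbar) = A phi_k e^{iat} + conj(A) conj(phi_k) e^{-iat}  (a complex
   number with zero imaginary part; we take its real part, psi is real-valued) *)
Definition psi0c (n : nat) (a : R) (A : Pt n -> R -> C) (k : bool) (t : R) (x : Pt n) (tb : R) : C :=
  Cplus (Cmult (Cmult (A x tb) (phi a k)) (expi (a * t)))
        (Cmult (Cmult (Cconj (A x tb)) (Cconj (phi a k))) (Cconj (expi (a * t)))).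

Definition psi0 (n : nat) (a : R) (A : Pt n -> R -> C) (k : bool) (t : R) : Pt n -> R -> R :=
  fun x tb => fst (psi0c a A k t x tb).

Definition sgn (k : bool) : R := if k then 1 else -1.

Definition forcing1 (n : nat) (a : R) (A : Pt n -> R -> C) (t : R) (x : Pt n) (tb : R) : R :=
  (1 + a ^ 2) / a * (psi0 a A true t x tb) ^ 2
  + 2 * a * psi0 a A true t x tb * psi0 a A false t x tb.

(* psi1 : t -> xbar -> tbar -> (psi1_1, psi1_2) is a 2 pi / a periodic-in-t solution of
   (d_t - M) psi1 = forcing1 * (1, -1),   M = [[a^2, a^2], [-(1+a^2), -a^2]] *)
Definition psi1_solution (n : nat) (a : R) (A : Pt n -> R -> C)
    (psi1 : R -> Pt n -> R -> R * R) : Prop :=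
  (forall t x tb, psi1 (t + 2 * PI / a) x tb = psi1 t x tb) /\
  (forall t x tb,
      ex_derive (fun s => fst (psi1 s x tb)) t /\
      ex_derive (fun s => snd (psi1 s x tb)) t /\
      Derive (fun s => fst (psi1 s x tb)) t
        - (a ^ 2 * fst (psi1 t x tb) + a ^ 2 * snd (psi1 t x tb))
        = forcing1 a A t x tb /\
      Derive (fun s => snd (psi1 s x tb)) t
        - (- (1 + a ^ 2) * fst (psi1 t x tb) - a ^ 2 * snd (psi1 t x tb))
        = - forcing1 a A t x tb).

Definition psi1c (n : nat) (psi1 : R -> Pt n -> R -> R * R) (k : bool) (t : R) (x : Pt n) (tb : R) : R :=
  if k then fst (psi1 t x tb) else snd (psi1 t x tb).

Definition B2 (n : nat) (a d1 d2 : R) (r mu : R -> R) (A : Pt n -> R -> C)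
    (psi1 : R -> Pt n -> R -> R * R) (k : bool) (t : R) (x : Pt n) (tb : R) : R :=
  let p01 := psi0 a A true t x tb in
  let p02 := psi0 a A false t x tb in
  let p11 := psi1c psi1 true t x tb in
  let p12 := psi1c psi1 false t x tb in
  - (pdR Dt (psi0 a A k t) x tb + / r tb * Derive r tb * psi0 a A k t x tb)
  + (if k then d1 else d2) * lapR (psi0 a A k t) x tb
  + sgn k * ((1 + a ^ 2) * mu tb * p01
             + 2 * (1 + a ^ 2) / a * p01 * p11
             + 2 * a * (p01 * p12 + p11 * p02)
             + p01 ^ 2 * p02).

Definition fourier1 (a : R) (f : R -> R) : C :=
  (a / (2 * PI) * RInt (fun t => f t * cos (a * t)) 0 (2 * PI / a),
   - (a / (2 * PI) * RInt (fun t => f t * sin (a * t)) 0 (2 * PI / a))).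

Definition B21 (n : nat) (a d1 d2 : R) (r mu : R -> R) (A : Pt n -> R -> C)
    (psi1 : R -> Pt n -> R -> R * R) (k : bool) (x : Pt n) (tb : R) : C :=
  fourier1 a (fun t => B2 a d1 d2 r mu A psi1 k t x tb).

Definition solvability (n : nat) (a d1 d2 : R) (r mu : R -> R) (A : Pt n -> R -> C)
    (psi1 : R -> Pt n -> R -> R * R) (x : Pt n) (tb : R) : Prop :=
  Cplus (Cmult (phistar a true) (B21 a d1 d2 r mu A psi1 true x tb))
        (Cmult (phistar a false) (B21 a d1 d2 r mu A psi1 false x tb)) = RtoC 0.

Definition c1 (a d1 d2 : R) : C := ((d1 + d2) / 2, - a * (d1 - d2) / 2).
Definition c2 (a : R) : R := (1 + a ^ 2) / 2.
Definition c3 (a : R) : C :=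
  ((2 + a ^ 2) / a ^ 2 / 2, (4 - 7 * a ^ 2 + 4 * a ^ 4) / (3 * a ^ 3) / 2).

Definition GL_eq (n : nat) (a d1 d2 : R) (g : R -> C) (A : Pt n -> R -> C) (x : Pt n) (tb : R) : Prop :=
  dtC A x tb =
  Cminus (Cplus (Cmult (c1 a d1 d2) (lapC A x tb)) (Cmult (g tb) (A x tb)))
         (Cmult (Cmult (c3 a) (A x tb)) (RtoC (Cmod (A x tb) ^ 2))).

(* Main.v *)
Require Import Defs.
From mathcomp Require Import ssreflect ssrfun ssrbool eqtype ssrnat fintype bigop.
From Stdlib Require Import Reals Lra Psatz FunctionalExtensionality.
From Coquelicot Require Import Coquelicot.
Local Open Scope R_scope.
Lemma aT a : 0 < a -> a * (2*PI/a) = 2*PI. Proof. intros; field; lra. Qed.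
Lemma RInt_by_deriv (F dF : R -> R) a b : (forall x, is_derive F x (dF x)) -> (forall x, continuous dF x) -> @eq R (RInt dF a b) (F b - F a).
Proof. intros H1 H2. apply is_RInt_unique. apply: (is_RInt_derive F dF); auto. Qed.
Lemma cont_of_ex (f : R -> R) x : ex_derive f x -> continuous f x.
Proof. intros H. by apply: ex_derive_continuous. Qed.
Lemma trig_aux a x : a*(sin x*sin x+cos x*cos x) = a /\ a*(sin x*sin x+cos x*cos x)^2 = a
  /\ a*cos x^2*(sin x*sin x+cos x*cos x) = a*cos x^2 /\ a*sin x^2*(sin x*sin x+cos x*cos x) = a*sin x^2
  /\ a*cos x*sin x*(sin x*sin x+cos x*cos x) = a*cos x*sin x.
Proof. have E := sin2_cos2 x. unfold Rsqr in E. rewrite E. repeat split; ring. Qed.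
Ltac trig_id a0 t0 :=
  let E1 := fresh in let E2 := fresh in let E3 := fresh in let E4 := fresh in let E5 := fresh in
  destruct (trig_aux a0 (a0*t0)) as [E1 [E2 [E3 [E4 E5]]]];
  field_simplify_eq; [lra|lra].
Lemma int_cc a : 0 < a -> @eq R (RInt (fun t => cos(a*t)^2) 0 (2*PI/a)) (PI/a).
Proof.
intros Ha.
rewrite (RInt_by_deriv (fun t => t/2 + sin(a*t)*cos(a*t)/(2*a))).
- rewrite aT // Rmult_0_r sin_2PI sin_0. field. lra.
- intros t. auto_derive. { lra. } trig_id a t.
- intros t. apply cont_of_ex. auto_derive. auto.
Qed.
Lemma int_ccss a : 0 < a -> @eq R (RInt (fun t => cos(a*t)^2*sin(a*t)^2) 0 (2*PI/a)) (PI/(4*a)).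
Proof.
intros Ha.
rewrite (RInt_by_deriv (fun t => t/8 - sin(a*t)*cos(a*t)*(cos(a*t)^2 - sin(a*t)^2)/(8*a))).
- rewrite aT // Rmult_0_r sin_2PI sin_0. field. lra.
- intros t. auto_derive. { lra. } trig_id a t.
- intros t. apply cont_of_ex. auto_derive. auto.
Qed.
Lemma int_cccc a : 0 < a -> @eq R (RInt (fun t => cos(a*t)^4) 0 (2*PI/a)) (3*PI/(4*a)).
Proof.
intros Ha.
rewrite (RInt_by_deriv (fun t => t/2 + sin(a*t)*cos(a*t)/(2*a) - (t/8 - sin(a*t)*cos(a*t)*(cos(a*t)^2 - sin(a*t)^2)/(8*a)))).
- rewrite aT // Rmult_0_r sin_2PI sin_0. field. lra.
- intros t. auto_derive. { lra. } trig_id a t.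
- intros t. apply cont_of_ex. auto_derive. auto.
Qed.
Lemma int_ssss a : 0 < a -> @eq R (RInt (fun t => sin(a*t)^4) 0 (2*PI/a)) (3*PI/(4*a)).
Proof.
intros Ha.
rewrite (RInt_by_deriv (fun t => t/2 - sin(a*t)*cos(a*t)/(2*a) - (t/8 - sin(a*t)*cos(a*t)*(cos(a*t)^2 - sin(a*t)^2)/(8*a)))).
- rewrite aT // Rmult_0_r sin_2PI sin_0. field. lra.
- intros t. auto_derive. { lra. } trig_id a t.
- intros t. apply cont_of_ex. auto_derive. auto.
Qed.
Lemma int_ss a : 0 < a -> @eq R (RInt (fun t => sin(a*t)^2) 0 (2*PI/a)) (PI/a).
Proof.
intros Ha.
rewrite (RInt_by_deriv (fun t => t/2 - sin(a*t)*cos(a*t)/(2*a))).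
- rewrite aT // Rmult_0_r sin_2PI sin_0. field. lra.
- intros t. auto_derive. { lra. } trig_id a t.
- intros t. apply cont_of_ex. auto_derive. auto.
Qed.
Lemma int_cs a : 0 < a -> @eq R (RInt (fun t => cos(a*t)*sin(a*t)) 0 (2*PI/a)) 0.
Proof.
intros Ha.
rewrite (RInt_by_deriv (fun t => sin(a*t)^2/(2*a))).
- rewrite aT // Rmult_0_r sin_2PI sin_0. field. lra.
- intros t. auto_derive. { lra. } field. lra.
- intros t. apply cont_of_ex. auto_derive. auto.
Qed.
Lemma int_cccs a : 0 < a -> @eq R (RInt (fun t => cos(a*t)^3*sin(a*t)) 0 (2*PI/a)) 0.
Proof.
intros Ha.
rewrite (RInt_by_deriv (fun t => - cos(a*t)^4/(4*a))).
- rewrite aT // Rmult_0_r cos_2PI cos_0. field. lra.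
- intros t. auto_derive. { lra. } field. lra.
- intros t. apply cont_of_ex. auto_derive. auto.
Qed.
Lemma int_csss a : 0 < a -> @eq R (RInt (fun t => cos(a*t)*sin(a*t)^3) 0 (2*PI/a)) 0.
Proof.
intros Ha.
rewrite (RInt_by_deriv (fun t => sin(a*t)^4/(4*a))).
- rewrite aT // Rmult_0_r sin_2PI sin_0. field. lra.
- intros t. auto_derive. { lra. } field. lra.
- intros t. apply cont_of_ex. auto_derive. auto.
Qed.
Lemma RInt_plus' (f g : R -> R) a b : ex_RInt f a b -> ex_RInt g a b ->
  @eq R (RInt (fun x => f x + g x) a b) (RInt f a b + RInt g a b).
Proof. intros. by apply: RInt_plus. Qed.
Lemma RInt_scal' (f : R -> R) k a b : ex_RInt f a b ->
  @eq R (RInt (fun x => k * f x) a b) (k * RInt f a b).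
Proof. intros. by apply: RInt_scal. Qed.
Ltac exR_tac := apply: ex_RInt_continuous => z _; apply: cont_of_ex; auto_derive; repeat split; auto.

Definition Jcc a (y : R -> R) := RInt (fun t => y t * cos(a*t)^2) 0 (2*PI/a).
Definition Jcs a (y : R -> R) := RInt (fun t => y t * (cos(a*t)*sin(a*t))) 0 (2*PI/a).
Definition Jss a (y : R -> R) := RInt (fun t => y t * sin(a*t)^2) 0 (2*PI/a).

Definition NFf (k1 k2 k3 k4 k5 k6 k7 k8 l1 l2 l3 m1 m2 m3 : R) (y1 y2 : R -> R) (a t : R) : R :=
  k1*cos(a*t)^4 + k2*(cos(a*t)^3*sin(a*t)) + k3*(cos(a*t)^2*sin(a*t)^2) + k4*(cos(a*t)*sin(a*t)^3)
  + k5*sin(a*t)^4 + k6*cos(a*t)^2 + k7*(cos(a*t)*sin(a*t)) + k8*sin(a*t)^2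
  + l1*(y1 t*cos(a*t)^2) + l2*(y1 t*(cos(a*t)*sin(a*t))) + l3*(y1 t*sin(a*t)^2)
  + m1*(y2 t*cos(a*t)^2) + m2*(y2 t*(cos(a*t)*sin(a*t))) + m3*(y2 t*sin(a*t)^2).

Lemma NF_int a y1 y2 k1 k2 k3 k4 k5 k6 k7 k8 l1 l2 l3 m1 m2 m3 :
  0 < a -> (forall t, ex_derive y1 t) -> (forall t, ex_derive y2 t) ->
  @eq R (RInt (fun t => NFf k1 k2 k3 k4 k5 k6 k7 k8 l1 l2 l3 m1 m2 m3 y1 y2 a t) 0 (2*PI/a))
  (k1*(3*PI/(4*a)) + k3*(PI/(4*a)) + k5*(3*PI/(4*a)) + k6*(PI/a) + k8*(PI/a)
   + l1*Jcc a y1 + l2*Jcs a y1 + l3*Jss a y1 + m1*Jcc a y2 + m2*Jcs a y2 + m3*Jss a y2).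
Proof.
move=> Ha H1 H2. rewrite /NFf.
rewrite !RInt_plus'; try exR_tac.
rewrite !RInt_scal'; try exR_tac.
rewrite int_cccc // int_cccs // int_ccss // int_csss // int_ssss // int_cc // int_cs // int_ss //.
rewrite /Jcc /Jcs /Jss. ring.
Qed.
Lemma cont_mult' (f g : R -> R) x : continuous f x -> continuous g x -> continuous (fun t => f t * g t) x.
Proof. intros. by apply: continuous_mult. Qed.
Lemma cont_plus' (f g : R -> R) x : continuous f x -> continuous g x -> continuous (fun t => f t + g t) x.
Proof. intros. by apply: continuous_plus. Qed.
Lemma IBP a (y dy g dg : R -> R) : 0 < a ->
  (forall t, is_derive y t (dy t)) -> (forall t, continuous dy t) ->
  (forall t, is_derive g t (dg t)) -> (forall t, continuous dg t) ->
  y (2*PI/a) = y 0 -> g (2*PI/a) = g 0 ->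
  @eq R (RInt (fun t => dy t * g t) 0 (2*PI/a)) (- RInt (fun t => y t * dg t) 0 (2*PI/a)).
Proof.
move=> Ha Hy Cdy Hg Cdg Py Pg.
have Cy : forall t, continuous y t by move=> t; apply: cont_of_ex; eexists; apply: Hy.
have Cg : forall t, continuous g t by move=> t; apply: cont_of_ex; eexists; apply: Hg.
have D : forall t, is_derive (fun t => y t * g t) t (dy t * g t + y t * dg t).
{ move=> t. have := is_derive_mult y g t (dy t) (dg t) (Hy t) (Hg t).
  move=> /(_ Rmult_comm) H. exact: H. }
have C : forall t, continuous (fun t => dy t * g t + y t * dg t) t.
{ move=> t. apply: cont_plus'; apply: cont_mult'; auto. }
have H := RInt_by_deriv _ _ 0 (2*PI/a) D C.
rewrite RInt_plus' in H.
- rewrite Py Pg in H. lra.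
- apply: ex_RInt_continuous => z _. apply: cont_mult'; auto.
- apply: ex_RInt_continuous => z _. apply: cont_mult'; auto.
Qed.
Lemma div_eq (k x y : R) : k <> 0 -> k * x = y -> x = y / k.
Proof. intros Hk H. rewrite -H. field. exact Hk. Qed.
Lemma solve_sys a j1cc j1cs j1ss j2cc j2cs j2ss fcc fcs fss : a <> 0 ->
 a^2*j1cc + a^2*j2cc + fcc = 2*a*j1cs ->
 a^2*j1cs + a^2*j2cs + fcs = -(a*(j1cc - j1ss)) ->
 a^2*j1ss + a^2*j2ss + fss = -(2*a*j1cs) ->
 -(1+a^2)*j1cc - a^2*j2cc - fcc = 2*a*j2cs ->
 -(1+a^2)*j1cs - a^2*j2cs - fcs = -(a*(j2cc - j2ss)) ->
 -(1+a^2)*j1ss - a^2*j2ss - fss = -(2*a*j2cs) ->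
 j1cc = -2*fcs/(3*a) /\ j1ss = 2*fcs/(3*a) /\ j1cs = (fcc - fss)/(3*a) /\
 j2cc = (-(fcc+fss)/a^2 + (fcc - fss + 4*a*fcs)/(3*a^2))/2 /\
 j2ss = (-(fcc+fss)/a^2 - (fcc - fss + 4*a*fcs)/(3*a^2))/2 /\
 j2cs = (2*fcs - 2*a*(fcc-fss))/(3*a^2)/2.
Proof.
move=> Ha H1 H2 H3 H4 H5 H6.
have s1 : j1cc + j1ss = 0 by lra.
have s2 : -(j1cc - j1ss) = 4*a*(j1cs + j2cs) by lra.
have s3 : j1cs = a*((j1cc - j1ss) + (j2cc - j2ss)) by lra.
have s3a := f_equal (Rmult a) s3.
have s2a := f_equal (Rmult a) s2.
have e1 : 3*a*j1cs = fcc - fss by nra.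
have e2 : (3*a/2)*(j1cc - j1ss) = -2*fcs by nra.
have a2 : a^2 <> 0 by apply: pow_nonzero.
have a3 : 3*a <> 0 by lra.
have a4 : 3*a/2 <> 0 by lra.
have e3 := div_eq _ _ _ a3 e1.
have e4 := div_eq _ _ _ a4 e2.
have e5 : a^2*(j2cc+j2ss) = -(fcc+fss).
{ have : a^2*(j1cc+j1ss) = 0 by rewrite s1; ring. lra. }
have e6 := div_eq _ _ _ a2 e5.
have e7 : (j2cc - j2ss) = j1cs/a - (j1cc - j1ss).
{ apply: (Rmult_eq_reg_l a) => //. field_simplify; [|done]. lra. }
have e8 : j2cs = -(j1cc - j1ss)/(4*a) - j1cs.
{ apply: (Rmult_eq_reg_l (4*a)); [|lra]. field_simplify; [|done]. lra. }
rewrite e3 e4 in e7 e8.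
repeat split.
- have : j1cc = ((j1cc+j1ss) + (j1cc - j1ss))/2 by field. rewrite s1 e4 => ->. field. done.
- have : j1ss = ((j1cc+j1ss) - (j1cc - j1ss))/2 by field. rewrite s1 e4 => ->. field. done.
- by rewrite e3.
- have : j2cc = ((j2cc+j2ss) + (j2cc - j2ss))/2 by field. rewrite e6 e7 => ->. field. done.
- have : j2ss = ((j2cc+j2ss) - (j2cc - j2ss))/2 by field. rewrite e6 e7 => ->. field. done.
- rewrite e8. field. done.
Qed.
Lemma psi0_val n a (A : Pt n -> R -> C) k t x tb :
  psi0 a A k t x tb = 2*(fst (phi a k)*cos(a*t) - snd (phi a k)*sin(a*t)) * ReF A x tb
                      + -2*(snd (phi a k)*cos(a*t) + fst (phi a k)*sin(a*t)) * ImF A x tb.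
Proof.
rewrite /psi0 /psi0c /ReF /ImF /expi.
case: (A x tb) => u v. case: (phi a k) => p q.
rewrite /Cplus /Cmult /Cconj /=. ring.
Qed.
Lemma psi0_fun n a (A : Pt n -> R -> C) k t :
  psi0 a A k t = fun x tb => 2*(fst (phi a k)*cos(a*t) - snd (phi a k)*sin(a*t)) * ReF A x tb
                      + -2*(snd (phi a k)*cos(a*t) + fst (phi a k)*sin(a*t)) * ImF A x tb.
Proof. apply: functional_extensionality => x. apply: functional_extensionality => tb. exact: psi0_val. Qed.
Lemma lin_pd n (d : dir n) (U V : Pt n -> R -> R) k1 k2 x tb :
  exR d U x tb -> exR d V x tb ->
  pdR d (fun x tb => k1 * U x tb + k2 * V x tb) x tb = k1 * pdR d U x tb + k2 * pdR d V x tb.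
Proof.
case: d => [j|] /= HU HV.
- rewrite Derive_plus; try (apply: ex_derive_scal; assumption). by rewrite !Derive_scal.
- rewrite Derive_plus; try (apply: ex_derive_scal; assumption). by rewrite !Derive_scal.
Qed.
Lemma big_lin n (F G : 'I_n -> R) k1 k2 :
  \big[Rplus/0]_(j < n) (k1 * F j + k2 * G j) = k1 * \big[Rplus/0]_(j < n) F j + k2 * \big[Rplus/0]_(j < n) G j.
Proof.
apply: (big_rec3 (fun x y z => x = k1 * y + k2 * z)); first by ring.
move=> i y1 y2 y3 _ ->. ring.
Qed.
Lemma lap_lin n (U V : Pt n -> R -> R) k1 k2 x tb :
  smoothR U -> smoothR V ->
  lapR (fun x tb => k1 * U x tb + k2 * V x tb) x tb = k1 * lapR U x tb + k2 * lapR V x tb.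
Proof.
move=> SU SV. rewrite /lapR -big_lin. apply: eq_bigr => j _.
have -> : pdR (Defs.Dx j) (fun x tb => k1 * U x tb + k2 * V x tb) =
          (fun x tb => k1 * pdR (Defs.Dx j) U x tb + k2 * pdR (Defs.Dx j) V x tb).
{ apply: functional_extensionality => y. apply: functional_extensionality => sb.
  apply: lin_pd. exact: (SU nil). exact: (SV nil). }
apply: lin_pd. exact: (SU (cons (Defs.Dx j) nil)). exact: (SV (cons (Defs.Dx j) nil)).
Qed.
Definition P01 (u v c s : R) := 2*c*u - 2*s*v.
Definition P02 (a u v c s : R) := 2*(-c - /a*s)*u - 2*(/a*c - s)*v.
Definition Fx a u v c s := (1+a^2)*/a*P01 u v c s^2 + 2*a*P01 u v c s*P02 a u v c s.
Definition Bx (k : bool) a d1 d2 u v ut vt Lu Lv m rho y1 y2 c s :=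
  let K1 := if k then 2*c else 2*(-c - /a*s) in
  let K2 := if k then -2*s else -2*(/a*c - s) in
  let dk := if k then d1 else d2 in
  -(K1*ut + K2*vt + rho*(K1*u+K2*v)) + dk*(K1*Lu+K2*Lv)
  + (if k then 1 else -1) * ((1+a^2)*m*P01 u v c s + 2*(1+a^2)*/a*P01 u v c s*y1
       + 2*a*(P01 u v c s*y2 + y1*P02 a u v c s) + P01 u v c s^2*P02 a u v c s).
Lemma F_eq n a (A : Pt n -> R -> C) t x tb :
  forcing1 a A t x tb = Fx a (ReF A x tb) (ImF A x tb) (cos (a*t)) (sin (a*t)).
Proof. rewrite /forcing1 !psi0_val /Fx /P01 /P02 /phi /=. rewrite /Rdiv. ring. Qed.
Lemma B2_eq n a d1 d2 r mu (A : Pt n -> R -> C) psi1 k t x tb : smoothC A ->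
  B2 a d1 d2 r mu A psi1 k t x tb =
  Bx k a d1 d2 (ReF A x tb) (ImF A x tb) (pdR Dt (ReF A) x tb) (pdR Dt (ImF A) x tb)
     (lapR (ReF A) x tb) (lapR (ImF A) x tb) (mu tb) (/ r tb * Derive r tb)
     (fst (psi1 t x tb)) (snd (psi1 t x tb)) (cos (a*t)) (sin (a*t)).
Proof.
move=> [SU SV].
rewrite /B2 !psi0_fun.
rewrite lin_pd; [|exact: (SU nil)|exact: (SV nil)].
rewrite lap_lin //.
rewrite /Bx /P01 /P02 /psi1c /phi /sgn.
case: k; cbv beta; simpl fst; simpl snd; rewrite /Rdiv; ring.
Qed.
Definition NFv (k1 k2 k3 k4 k5 k6 k7 k8 l1 l2 l3 m1 m2 m3 : R) (y1 y2 : R -> R) (a : R) : R :=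
  k1*(3*PI/(4*a)) + k3*(PI/(4*a)) + k5*(3*PI/(4*a)) + k6*(PI/a) + k8*(PI/a)
   + l1*Jcc a y1 + l2*Jcs a y1 + l3*Jss a y1 + m1*Jcc a y2 + m2*Jcs a y2 + m3*Jss a y2.
Definition B1cN (a d1 d2 u v ut vt Lu Lv m rho : R) (y1 y2 : R -> R) (t : R) : R := NFf ((-8)*(u)^3 + (-8)*(/ a)*(u)^2*(v)) ((24)*(u)^2*(v) + (16)*(/ a)*(u)*(v)^2 + (-8)*(/ a)*(u)^3) ((-24)*(u)*(v)^2 + (-8)*(/ a)*(v)^3 + (16)*(/ a)*(u)^2*(v)) ((8)*(v)^3 + (-8)*(/ a)*(u)*(v)^2) (0) ((2)*(Lu)*(d1) + (-2)*(ut) + (-2)*(u)*(rho) + (2)*(u)*(m) + (2)*(a)^2*(u)*(m)) ((-2)*(Lv)*(d1) + (2)*(vt) + (2)*(v)*(rho) + (-2)*(v)*(m) + (-2)*(a)^2*(v)*(m)) (0) ((4)*(/ a)*(u) + (-4)*(a)*(u) + (-4)*(a)*(/ a)*(v) + (4)*(a)^2*(/ a)*(u)) ((-4)*(/ a)*(v) + (4)*(a)*(v) + (-4)*(a)*(/ a)*(u) + (-4)*(a)^2*(/ a)*(v)) (0) ((4)*(a)*(u)) ((-4)*(a)*(v)) (0) y1 y2 a t.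
Definition B1cV (a d1 d2 u v ut vt Lu Lv m rho : R) (y1 y2 : R -> R) : R := NFv ((-8)*(u)^3 + (-8)*(/ a)*(u)^2*(v)) ((24)*(u)^2*(v) + (16)*(/ a)*(u)*(v)^2 + (-8)*(/ a)*(u)^3) ((-24)*(u)*(v)^2 + (-8)*(/ a)*(v)^3 + (16)*(/ a)*(u)^2*(v)) ((8)*(v)^3 + (-8)*(/ a)*(u)*(v)^2) (0) ((2)*(Lu)*(d1) + (-2)*(ut) + (-2)*(u)*(rho) + (2)*(u)*(m) + (2)*(a)^2*(u)*(m)) ((-2)*(Lv)*(d1) + (2)*(vt) + (2)*(v)*(rho) + (-2)*(v)*(m) + (-2)*(a)^2*(v)*(m)) (0) ((4)*(/ a)*(u) + (-4)*(a)*(u) + (-4)*(a)*(/ a)*(v) + (4)*(a)^2*(/ a)*(u)) ((-4)*(/ a)*(v) + (4)*(a)*(v) + (-4)*(a)*(/ a)*(u) + (-4)*(a)^2*(/ a)*(v)) (0) ((4)*(a)*(u)) ((-4)*(a)*(v)) (0) y1 y2 a.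
Lemma B1c_int (a d1 d2 u v ut vt Lu Lv m rho : R) (y1 y2 : R -> R) : 0 < a -> (forall t, ex_derive y1 t) -> (forall t, ex_derive y2 t) -> @eq R (RInt (fun t => B1cN a d1 d2 u v ut vt Lu Lv m rho y1 y2 t) 0 (2*PI/a)) (B1cV a d1 d2 u v ut vt Lu Lv m rho y1 y2).
Proof. move=> Ha H1 H2. rewrite /B1cN /B1cV. exact: NF_int. Qed.
Definition B1sN (a d1 d2 u v ut vt Lu Lv m rho : R) (y1 y2 : R -> R) (t : R) : R := NFf (0) ((-8)*(u)^3 + (-8)*(/ a)*(u)^2*(v)) ((24)*(u)^2*(v) + (16)*(/ a)*(u)*(v)^2 + (-8)*(/ a)*(u)^3) ((-24)*(u)*(v)^2 + (-8)*(/ a)*(v)^3 + (16)*(/ a)*(u)^2*(v)) ((8)*(v)^3 + (-8)*(/ a)*(u)*(v)^2) (0) ((2)*(Lu)*(d1) + (-2)*(ut) + (-2)*(u)*(rho) + (2)*(u)*(m) + (2)*(a)^2*(u)*(m)) ((-2)*(Lv)*(d1) + (2)*(vt) + (2)*(v)*(rho) + (-2)*(v)*(m) + (-2)*(a)^2*(v)*(m)) (0) ((4)*(/ a)*(u) + (-4)*(a)*(u) + (-4)*(a)*(/ a)*(v) + (4)*(a)^2*(/ a)*(u)) ((-4)*(/ a)*(v) + (4)*(a)*(v) + (-4)*(a)*(/ a)*(u) + (-4)*(a)^2*(/ a)*(v)) (0) ((4)*(a)*(u)) ((-4)*(a)*(v)) y1 y2 a t.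
Definition B1sV (a d1 d2 u v ut vt Lu Lv m rho : R) (y1 y2 : R -> R) : R := NFv (0) ((-8)*(u)^3 + (-8)*(/ a)*(u)^2*(v)) ((24)*(u)^2*(v) + (16)*(/ a)*(u)*(v)^2 + (-8)*(/ a)*(u)^3) ((-24)*(u)*(v)^2 + (-8)*(/ a)*(v)^3 + (16)*(/ a)*(u)^2*(v)) ((8)*(v)^3 + (-8)*(/ a)*(u)*(v)^2) (0) ((2)*(Lu)*(d1) + (-2)*(ut) + (-2)*(u)*(rho) + (2)*(u)*(m) + (2)*(a)^2*(u)*(m)) ((-2)*(Lv)*(d1) + (2)*(vt) + (2)*(v)*(rho) + (-2)*(v)*(m) + (-2)*(a)^2*(v)*(m)) (0) ((4)*(/ a)*(u) + (-4)*(a)*(u) + (-4)*(a)*(/ a)*(v) + (4)*(a)^2*(/ a)*(u)) ((-4)*(/ a)*(v) + (4)*(a)*(v) + (-4)*(a)*(/ a)*(u) + (-4)*(a)^2*(/ a)*(v)) (0) ((4)*(a)*(u)) ((-4)*(a)*(v)) y1 y2 a.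
Lemma B1s_int (a d1 d2 u v ut vt Lu Lv m rho : R) (y1 y2 : R -> R) : 0 < a -> (forall t, ex_derive y1 t) -> (forall t, ex_derive y2 t) -> @eq R (RInt (fun t => B1sN a d1 d2 u v ut vt Lu Lv m rho y1 y2 t) 0 (2*PI/a)) (B1sV a d1 d2 u v ut vt Lu Lv m rho y1 y2).
Proof. move=> Ha H1 H2. rewrite /B1sN /B1sV. exact: NF_int. Qed.
Definition B2cN (a d1 d2 u v ut vt Lu Lv m rho : R) (y1 y2 : R -> R) (t : R) : R := NFf ((8)*(u)^3 + (8)*(/ a)*(u)^2*(v)) ((-24)*(u)^2*(v) + (-16)*(/ a)*(u)*(v)^2 + (8)*(/ a)*(u)^3) ((24)*(u)*(v)^2 + (8)*(/ a)*(v)^3 + (-16)*(/ a)*(u)^2*(v)) ((-8)*(v)^3 + (8)*(/ a)*(u)*(v)^2) (0) ((-2)*(Lu)*(d2) + (2)*(ut) + (2)*(u)*(rho) + (-2)*(u)*(m) + (-2)*(/ a)*(Lv)*(d2) + (2)*(/ a)*(vt) + (2)*(/ a)*(v)*(rho) + (-2)*(a)^2*(u)*(m)) ((2)*(Lv)*(d2) + (-2)*(vt) + (-2)*(v)*(rho) + (2)*(v)*(m) + (-2)*(/ a)*(Lu)*(d2) + (2)*(/ a)*(ut) + (2)*(/ a)*(u)*(rho) + (2)*(a)^2*(v)*(m)) (0) ((-4)*(/ a)*(u) + (4)*(a)*(u) + (4)*(a)*(/ a)*(v) + (-4)*(a)^2*(/ a)*(u)) ((4)*(/ a)*(v) + (-4)*(a)*(v)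 + (4)*(a)*(/ a)*(u) + (4)*(a)^2*(/ a)*(v)) (0) ((-4)*(a)*(u)) ((4)*(a)*(v)) (0) y1 y2 a t.
Definition B2cV (a d1 d2 u v ut vt Lu Lv m rho : R) (y1 y2 : R -> R) : R := NFv ((8)*(u)^3 + (8)*(/ a)*(u)^2*(v)) ((-24)*(u)^2*(v) + (-16)*(/ a)*(u)*(v)^2 + (8)*(/ a)*(u)^3) ((24)*(u)*(v)^2 + (8)*(/ a)*(v)^3 + (-16)*(/ a)*(u)^2*(v)) ((-8)*(v)^3 + (8)*(/ a)*(u)*(v)^2) (0) ((-2)*(Lu)*(d2) + (2)*(ut) + (2)*(u)*(rho) + (-2)*(u)*(m) + (-2)*(/ a)*(Lv)*(d2) + (2)*(/ a)*(vt) + (2)*(/ a)*(v)*(rho) + (-2)*(a)^2*(u)*(m)) ((2)*(Lv)*(d2) + (-2)*(vt) + (-2)*(v)*(rho) + (2)*(v)*(m) + (-2)*(/ a)*(Lu)*(d2) + (2)*(/ a)*(ut) + (2)*(/ a)*(u)*(rho) + (2)*(a)^2*(v)*(m)) (0) ((-4)*(/ a)*(u) + (4)*(a)*(u) + (4)*(a)*(/ a)*(v) + (-4)*(a)^2*(/ a)*(u)) ((4)*(/ a)*(v) + (-4)*(a)*(v) + (4)*(a)*(/ a)*(u) + (4)*(a)^2*(/ a)*(v)) (0) ((-4)*(a)*(u)) ((4)*(a)*(v)) (0) y1 y2 a.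
Lemma B2c_int (a d1 d2 u v ut vt Lu Lv m rho : R) (y1 y2 : R -> R) : 0 < a -> (forall t, ex_derive y1 t) -> (forall t, ex_derive y2 t) -> @eq R (RInt (fun t => B2cN a d1 d2 u v ut vt Lu Lv m rho y1 y2 t) 0 (2*PI/a)) (B2cV a d1 d2 u v ut vt Lu Lv m rho y1 y2).
Proof. move=> Ha H1 H2. rewrite /B2cN /B2cV. exact: NF_int. Qed.
Definition B2sN (a d1 d2 u v ut vt Lu Lv m rho : R) (y1 y2 : R -> R) (t : R) : R := NFf (0) ((8)*(u)^3 + (8)*(/ a)*(u)^2*(v)) ((-24)*(u)^2*(v) + (-16)*(/ a)*(u)*(v)^2 + (8)*(/ a)*(u)^3) ((24)*(u)*(v)^2 + (8)*(/ a)*(v)^3 + (-16)*(/ a)*(u)^2*(v)) ((-8)*(v)^3 + (8)*(/ a)*(u)*(v)^2) (0) ((-2)*(Lu)*(d2) + (2)*(ut) + (2)*(u)*(rho) + (-2)*(u)*(m) + (-2)*(/ a)*(Lv)*(d2) + (2)*(/ a)*(vt) + (2)*(/ a)*(v)*(rho) + (-2)*(a)^2*(u)*(m)) ((2)*(Lv)*(d2) + (-2)*(vt) + (-2)*(v)*(rho) + (2)*(v)*(m) + (-2)*(/ a)*(Lu)*(d2) + (2)*(/ a)*(ut) + (2)*(/ a)*(u)*(rho) + (2)*(a)^2*(v)*(m)) (0) ((-4)*(/ a)*(u) + (4)*(a)*(u) + (4)*(a)*(/ a)*(v) + (-4)*(a)^2*(/ a)*(u)) ((4)*(/ a)*(v)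 + (-4)*(a)*(v) + (4)*(a)*(/ a)*(u) + (4)*(a)^2*(/ a)*(v)) (0) ((-4)*(a)*(u)) ((4)*(a)*(v)) y1 y2 a t.
Definition B2sV (a d1 d2 u v ut vt Lu Lv m rho : R) (y1 y2 : R -> R) : R := NFv (0) ((8)*(u)^3 + (8)*(/ a)*(u)^2*(v)) ((-24)*(u)^2*(v) + (-16)*(/ a)*(u)*(v)^2 + (8)*(/ a)*(u)^3) ((24)*(u)*(v)^2 + (8)*(/ a)*(v)^3 + (-16)*(/ a)*(u)^2*(v)) ((-8)*(v)^3 + (8)*(/ a)*(u)*(v)^2) (0) ((-2)*(Lu)*(d2) + (2)*(ut) + (2)*(u)*(rho) + (-2)*(u)*(m) + (-2)*(/ a)*(Lv)*(d2) + (2)*(/ a)*(vt) + (2)*(/ a)*(v)*(rho) + (-2)*(a)^2*(u)*(m)) ((2)*(Lv)*(d2) + (-2)*(vt) + (-2)*(v)*(rho) + (2)*(v)*(m) + (-2)*(/ a)*(Lu)*(d2) + (2)*(/ a)*(ut) + (2)*(/ a)*(u)*(rho) + (2)*(a)^2*(v)*(m)) (0) ((-4)*(/ a)*(u) + (4)*(a)*(u) + (4)*(a)*(/ a)*(v) + (-4)*(a)^2*(/ a)*(u)) ((4)*(/ a)*(v) + (-4)*(a)*(v) + (4)*(a)*(/ a)*(u) + (4)*(a)^2*(/ a)*(v)) (0) ((-4)*(a)*(u)) ((4)*(a)*(v)) y1 y2 a.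
Lemma B2s_int (a d1 d2 u v ut vt Lu Lv m rho : R) (y1 y2 : R -> R) : 0 < a -> (forall t, ex_derive y1 t) -> (forall t, ex_derive y2 t) -> @eq R (RInt (fun t => B2sN a d1 d2 u v ut vt Lu Lv m rho y1 y2 t) 0 (2*PI/a)) (B2sV a d1 d2 u v ut vt Lu Lv m rho y1 y2).
Proof. move=> Ha H1 H2. rewrite /B2sN /B2sV. exact: NF_int. Qed.
Definition E1ccN (a d1 d2 u v ut vt Lu Lv m rho : R) (y1 y2 : R -> R) (t : R) : R := NFf ((4)*(/ a)*(u)^2 + (-8)*(a)*(u)^2 + (-8)*(a)*(/ a)*(u)*(v) + (4)*(a)^2*(/ a)*(u)^2) ((-8)*(/ a)*(u)*(v) + (16)*(a)*(u)*(v) + (8)*(a)*(/ a)*(v)^2 + (-8)*(a)*(/ a)*(u)^2 + (-8)*(a)^2*(/ a)*(u)*(v)) ((4)*(/ a)*(v)^2 + (-8)*(a)*(v)^2 + (8)*(a)*(/ a)*(u)*(v) + (4)*(a)^2*(/ a)*(v)^2) (0) (0) (0) (0) (0) ((1)*(a)^2) (0) (0) ((1)*(a)^2) (0) (0) y1 y2 a t.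
Definition E1ccV (a d1 d2 u v ut vt Lu Lv m rho : R) (y1 y2 : R -> R) : R := NFv ((4)*(/ a)*(u)^2 + (-8)*(a)*(u)^2 + (-8)*(a)*(/ a)*(u)*(v) + (4)*(a)^2*(/ a)*(u)^2) ((-8)*(/ a)*(u)*(v) + (16)*(a)*(u)*(v) + (8)*(a)*(/ a)*(v)^2 + (-8)*(a)*(/ a)*(u)^2 + (-8)*(a)^2*(/ a)*(u)*(v)) ((4)*(/ a)*(v)^2 + (-8)*(a)*(v)^2 + (8)*(a)*(/ a)*(u)*(v) + (4)*(a)^2*(/ a)*(v)^2) (0) (0) (0) (0) (0) ((1)*(a)^2) (0) (0) ((1)*(a)^2) (0) (0) y1 y2 a.
Lemma E1cc_int (a d1 d2 u v ut vt Lu Lv m rho : R) (y1 y2 : R -> R) : 0 < a -> (forall t, ex_derive y1 t) -> (forall t, ex_derive y2 t) -> @eq R (RInt (fun t => E1ccN a d1 d2 u v ut vt Lu Lv m rho y1 y2 t) 0 (2*PI/a)) (E1ccV a d1 d2 u v ut vt Lu Lv m rho y1 y2).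
Proof. move=> Ha H1 H2. rewrite /E1ccN /E1ccV. exact: NF_int. Qed.
Definition E2ccN (a d1 d2 u v ut vt Lu Lv m rho : R) (y1 y2 : R -> R) (t : R) : R := NFf ((-4)*(/ a)*(u)^2 + (8)*(a)*(u)^2 + (8)*(a)*(/ a)*(u)*(v) + (-4)*(a)^2*(/ a)*(u)^2) ((8)*(/ a)*(u)*(v) + (-16)*(a)*(u)*(v) + (-8)*(a)*(/ a)*(v)^2 + (8)*(a)*(/ a)*(u)^2 + (8)*(a)^2*(/ a)*(u)*(v)) ((-4)*(/ a)*(v)^2 + (8)*(a)*(v)^2 + (-8)*(a)*(/ a)*(u)*(v) + (-4)*(a)^2*(/ a)*(v)^2) (0) (0) (0) (0) (0) ((-1) + (-1)*(a)^2) (0) (0) ((-1)*(a)^2) (0) (0) y1 y2 a t.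
Definition E2ccV (a d1 d2 u v ut vt Lu Lv m rho : R) (y1 y2 : R -> R) : R := NFv ((-4)*(/ a)*(u)^2 + (8)*(a)*(u)^2 + (8)*(a)*(/ a)*(u)*(v) + (-4)*(a)^2*(/ a)*(u)^2) ((8)*(/ a)*(u)*(v) + (-16)*(a)*(u)*(v) + (-8)*(a)*(/ a)*(v)^2 + (8)*(a)*(/ a)*(u)^2 + (8)*(a)^2*(/ a)*(u)*(v)) ((-4)*(/ a)*(v)^2 + (8)*(a)*(v)^2 + (-8)*(a)*(/ a)*(u)*(v) + (-4)*(a)^2*(/ a)*(v)^2) (0) (0) (0) (0) (0) ((-1) + (-1)*(a)^2) (0) (0) ((-1)*(a)^2) (0) (0) y1 y2 a.
Lemma E2cc_int (a d1 d2 u v ut vt Lu Lv m rho : R) (y1 y2 : R -> R) : 0 < a -> (forall t, ex_derive y1 t) -> (forall t, ex_derive y2 t) -> @eq R (RInt (fun t => E2ccN a d1 d2 u v ut vt Lu Lv m rho y1 y2 t) 0 (2*PI/a)) (E2ccV a d1 d2 u v ut vt Lu Lv m rho y1 y2).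
Proof. move=> Ha H1 H2. rewrite /E2ccN /E2ccV. exact: NF_int. Qed.
Definition FccN (a d1 d2 u v ut vt Lu Lv m rho : R) (y1 y2 : R -> R) (t : R) : R := NFf ((4)*(/ a)*(u)^2 + (-8)*(a)*(u)^2 + (-8)*(a)*(/ a)*(u)*(v) + (4)*(a)^2*(/ a)*(u)^2) ((-8)*(/ a)*(u)*(v) + (16)*(a)*(u)*(v) + (8)*(a)*(/ a)*(v)^2 + (-8)*(a)*(/ a)*(u)^2 + (-8)*(a)^2*(/ a)*(u)*(v)) ((4)*(/ a)*(v)^2 + (-8)*(a)*(v)^2 + (8)*(a)*(/ a)*(u)*(v) + (4)*(a)^2*(/ a)*(v)^2) (0) (0) (0) (0) (0) (0) (0) (0) (0) (0) (0) y1 y2 a t.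
Definition FccV (a d1 d2 u v ut vt Lu Lv m rho : R) (y1 y2 : R -> R) : R := NFv ((4)*(/ a)*(u)^2 + (-8)*(a)*(u)^2 + (-8)*(a)*(/ a)*(u)*(v) + (4)*(a)^2*(/ a)*(u)^2) ((-8)*(/ a)*(u)*(v) + (16)*(a)*(u)*(v) + (8)*(a)*(/ a)*(v)^2 + (-8)*(a)*(/ a)*(u)^2 + (-8)*(a)^2*(/ a)*(u)*(v)) ((4)*(/ a)*(v)^2 + (-8)*(a)*(v)^2 + (8)*(a)*(/ a)*(u)*(v) + (4)*(a)^2*(/ a)*(v)^2) (0) (0) (0) (0) (0) (0) (0) (0) (0) (0) (0) y1 y2 a.
Lemma Fcc_int (a d1 d2 u v ut vt Lu Lv m rho : R) (y1 y2 : R -> R) : 0 < a -> (forall t, ex_derive y1 t) -> (forall t, ex_derive y2 t) -> @eq R (RInt (fun t => FccN a d1 d2 u v ut vt Lu Lv m rho y1 y2 t) 0 (2*PI/a)) (FccV a d1 d2 u v ut vt Lu Lv m rho y1 y2).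
Proof. move=> Ha H1 H2. rewrite /FccN /FccV. exact: NF_int. Qed.
Definition E1csN (a d1 d2 u v ut vt Lu Lv m rho : R) (y1 y2 : R -> R) (t : R) : R := NFf (0) ((4)*(/ a)*(u)^2 + (-8)*(a)*(u)^2 + (-8)*(a)*(/ a)*(u)*(v) + (4)*(a)^2*(/ a)*(u)^2) ((-8)*(/ a)*(u)*(v) + (16)*(a)*(u)*(v) + (8)*(a)*(/ a)*(v)^2 + (-8)*(a)*(/ a)*(u)^2 + (-8)*(a)^2*(/ a)*(u)*(v)) ((4)*(/ a)*(v)^2 + (-8)*(a)*(v)^2 + (8)*(a)*(/ a)*(u)*(v) + (4)*(a)^2*(/ a)*(v)^2) (0) (0) (0) (0) (0) ((1)*(a)^2) (0) (0) ((1)*(a)^2) (0) y1 y2 a t.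
Definition E1csV (a d1 d2 u v ut vt Lu Lv m rho : R) (y1 y2 : R -> R) : R := NFv (0) ((4)*(/ a)*(u)^2 + (-8)*(a)*(u)^2 + (-8)*(a)*(/ a)*(u)*(v) + (4)*(a)^2*(/ a)*(u)^2) ((-8)*(/ a)*(u)*(v) + (16)*(a)*(u)*(v) + (8)*(a)*(/ a)*(v)^2 + (-8)*(a)*(/ a)*(u)^2 + (-8)*(a)^2*(/ a)*(u)*(v)) ((4)*(/ a)*(v)^2 + (-8)*(a)*(v)^2 + (8)*(a)*(/ a)*(u)*(v) + (4)*(a)^2*(/ a)*(v)^2) (0) (0) (0) (0) (0) ((1)*(a)^2) (0) (0) ((1)*(a)^2) (0) y1 y2 a.
Lemma E1cs_int (a d1 d2 u v ut vt Lu Lv m rho : R) (y1 y2 : R -> R) : 0 < a -> (forall t, ex_derive y1 t) -> (forall t, ex_derive y2 t) -> @eq R (RInt (fun t => E1csN a d1 d2 u v ut vt Lu Lv m rho y1 y2 t) 0 (2*PI/a)) (E1csV a d1 d2 u v ut vt Lu Lv m rho y1 y2).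
Proof. move=> Ha H1 H2. rewrite /E1csN /E1csV. exact: NF_int. Qed.
Definition E2csN (a d1 d2 u v ut vt Lu Lv m rho : R) (y1 y2 : R -> R) (t : R) : R := NFf (0) ((-4)*(/ a)*(u)^2 + (8)*(a)*(u)^2 + (8)*(a)*(/ a)*(u)*(v) + (-4)*(a)^2*(/ a)*(u)^2) ((8)*(/ a)*(u)*(v) + (-16)*(a)*(u)*(v) + (-8)*(a)*(/ a)*(v)^2 + (8)*(a)*(/ a)*(u)^2 + (8)*(a)^2*(/ a)*(u)*(v)) ((-4)*(/ a)*(v)^2 + (8)*(a)*(v)^2 + (-8)*(a)*(/ a)*(u)*(v) + (-4)*(a)^2*(/ a)*(v)^2) (0) (0) (0) (0) (0) ((-1) + (-1)*(a)^2) (0) (0) ((-1)*(a)^2) (0) y1 y2 a t.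
Definition E2csV (a d1 d2 u v ut vt Lu Lv m rho : R) (y1 y2 : R -> R) : R := NFv (0) ((-4)*(/ a)*(u)^2 + (8)*(a)*(u)^2 + (8)*(a)*(/ a)*(u)*(v) + (-4)*(a)^2*(/ a)*(u)^2) ((8)*(/ a)*(u)*(v) + (-16)*(a)*(u)*(v) + (-8)*(a)*(/ a)*(v)^2 + (8)*(a)*(/ a)*(u)^2 + (8)*(a)^2*(/ a)*(u)*(v)) ((-4)*(/ a)*(v)^2 + (8)*(a)*(v)^2 + (-8)*(a)*(/ a)*(u)*(v) + (-4)*(a)^2*(/ a)*(v)^2) (0) (0) (0) (0) (0) ((-1) + (-1)*(a)^2) (0) (0) ((-1)*(a)^2) (0) y1 y2 a.
Lemma E2cs_int (a d1 d2 u v ut vt Lu Lv m rho : R) (y1 y2 : R -> R) : 0 < a -> (forall t, ex_derive y1 t) -> (forall t, ex_derive y2 t) -> @eq R (RInt (fun t => E2csN a d1 d2 u v ut vt Lu Lv m rho y1 y2 t) 0 (2*PI/a)) (E2csV a d1 d2 u v ut vt Lu Lv m rho y1 y2).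
Proof. move=> Ha H1 H2. rewrite /E2csN /E2csV. exact: NF_int. Qed.
Definition FcsN (a d1 d2 u v ut vt Lu Lv m rho : R) (y1 y2 : R -> R) (t : R) : R := NFf (0) ((4)*(/ a)*(u)^2 + (-8)*(a)*(u)^2 + (-8)*(a)*(/ a)*(u)*(v) + (4)*(a)^2*(/ a)*(u)^2) ((-8)*(/ a)*(u)*(v) + (16)*(a)*(u)*(v) + (8)*(a)*(/ a)*(v)^2 + (-8)*(a)*(/ a)*(u)^2 + (-8)*(a)^2*(/ a)*(u)*(v)) ((4)*(/ a)*(v)^2 + (-8)*(a)*(v)^2 + (8)*(a)*(/ a)*(u)*(v) + (4)*(a)^2*(/ a)*(v)^2) (0) (0) (0) (0) (0) (0) (0) (0) (0) (0) y1 y2 a t.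
Definition FcsV (a d1 d2 u v ut vt Lu Lv m rho : R) (y1 y2 : R -> R) : R := NFv (0) ((4)*(/ a)*(u)^2 + (-8)*(a)*(u)^2 + (-8)*(a)*(/ a)*(u)*(v) + (4)*(a)^2*(/ a)*(u)^2) ((-8)*(/ a)*(u)*(v) + (16)*(a)*(u)*(v) + (8)*(a)*(/ a)*(v)^2 + (-8)*(a)*(/ a)*(u)^2 + (-8)*(a)^2*(/ a)*(u)*(v)) ((4)*(/ a)*(v)^2 + (-8)*(a)*(v)^2 + (8)*(a)*(/ a)*(u)*(v) + (4)*(a)^2*(/ a)*(v)^2) (0) (0) (0) (0) (0) (0) (0) (0) (0) (0) y1 y2 a.
Lemma Fcs_int (a d1 d2 u v ut vt Lu Lv m rho : R) (y1 y2 : R -> R) : 0 < a -> (forall t, ex_derive y1 t) -> (forall t, ex_derive y2 t) -> @eq R (RInt (fun t => FcsN a d1 d2 u v ut vt Lu Lv m rho y1 y2 t) 0 (2*PI/a)) (FcsV a d1 d2 u v ut vt Lu Lv m rho y1 y2).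
Proof. move=> Ha H1 H2. rewrite /FcsN /FcsV. exact: NF_int. Qed.
Definition E1ssN (a d1 d2 u v ut vt Lu Lv m rho : R) (y1 y2 : R -> R) (t : R) : R := NFf (0) (0) ((4)*(/ a)*(u)^2 + (-8)*(a)*(u)^2 + (-8)*(a)*(/ a)*(u)*(v) + (4)*(a)^2*(/ a)*(u)^2) ((-8)*(/ a)*(u)*(v) + (16)*(a)*(u)*(v) + (8)*(a)*(/ a)*(v)^2 + (-8)*(a)*(/ a)*(u)^2 + (-8)*(a)^2*(/ a)*(u)*(v)) ((4)*(/ a)*(v)^2 + (-8)*(a)*(v)^2 + (8)*(a)*(/ a)*(u)*(v) + (4)*(a)^2*(/ a)*(v)^2) (0) (0) (0) (0) (0) ((1)*(a)^2) (0) (0) ((1)*(a)^2) y1 y2 a t.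
Definition E1ssV (a d1 d2 u v ut vt Lu Lv m rho : R) (y1 y2 : R -> R) : R := NFv (0) (0) ((4)*(/ a)*(u)^2 + (-8)*(a)*(u)^2 + (-8)*(a)*(/ a)*(u)*(v) + (4)*(a)^2*(/ a)*(u)^2) ((-8)*(/ a)*(u)*(v) + (16)*(a)*(u)*(v) + (8)*(a)*(/ a)*(v)^2 + (-8)*(a)*(/ a)*(u)^2 + (-8)*(a)^2*(/ a)*(u)*(v)) ((4)*(/ a)*(v)^2 + (-8)*(a)*(v)^2 + (8)*(a)*(/ a)*(u)*(v) + (4)*(a)^2*(/ a)*(v)^2) (0) (0) (0) (0) (0) ((1)*(a)^2) (0) (0) ((1)*(a)^2) y1 y2 a.
Lemma E1ss_int (a d1 d2 u v ut vt Lu Lv m rho : R) (y1 y2 : R -> R) : 0 < a -> (forall t, ex_derive y1 t) -> (forall t, ex_derive y2 t) -> @eq R (RInt (fun t => E1ssN a d1 d2 u v ut vt Lu Lv m rho y1 y2 t) 0 (2*PI/a)) (E1ssV a d1 d2 u v ut vt Lu Lv m rho y1 y2).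
Proof. move=> Ha H1 H2. rewrite /E1ssN /E1ssV. exact: NF_int. Qed.
Definition E2ssN (a d1 d2 u v ut vt Lu Lv m rho : R) (y1 y2 : R -> R) (t : R) : R := NFf (0) (0) ((-4)*(/ a)*(u)^2 + (8)*(a)*(u)^2 + (8)*(a)*(/ a)*(u)*(v) + (-4)*(a)^2*(/ a)*(u)^2) ((8)*(/ a)*(u)*(v) + (-16)*(a)*(u)*(v) + (-8)*(a)*(/ a)*(v)^2 + (8)*(a)*(/ a)*(u)^2 + (8)*(a)^2*(/ a)*(u)*(v)) ((-4)*(/ a)*(v)^2 + (8)*(a)*(v)^2 + (-8)*(a)*(/ a)*(u)*(v) + (-4)*(a)^2*(/ a)*(v)^2) (0) (0) (0) (0) (0) ((-1) + (-1)*(a)^2) (0) (0) ((-1)*(a)^2) y1 y2 a t.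
Definition E2ssV (a d1 d2 u v ut vt Lu Lv m rho : R) (y1 y2 : R -> R) : R := NFv (0) (0) ((-4)*(/ a)*(u)^2 + (8)*(a)*(u)^2 + (8)*(a)*(/ a)*(u)*(v) + (-4)*(a)^2*(/ a)*(u)^2) ((8)*(/ a)*(u)*(v) + (-16)*(a)*(u)*(v) + (-8)*(a)*(/ a)*(v)^2 + (8)*(a)*(/ a)*(u)^2 + (8)*(a)^2*(/ a)*(u)*(v)) ((-4)*(/ a)*(v)^2 + (8)*(a)*(v)^2 + (-8)*(a)*(/ a)*(u)*(v) + (-4)*(a)^2*(/ a)*(v)^2) (0) (0) (0) (0) (0) ((-1) + (-1)*(a)^2) (0) (0) ((-1)*(a)^2) y1 y2 a.
Lemma E2ss_int (a d1 d2 u v ut vt Lu Lv m rho : R) (y1 y2 : R -> R) : 0 < a -> (forall t, ex_derive y1 t) -> (forall t, ex_derive y2 t) -> @eq R (RInt (fun t => E2ssN a d1 d2 u v ut vt Lu Lv m rho y1 y2 t) 0 (2*PI/a)) (E2ssV a d1 d2 u v ut vt Lu Lv m rho y1 y2).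
Proof. move=> Ha H1 H2. rewrite /E2ssN /E2ssV. exact: NF_int. Qed.
Definition FssN (a d1 d2 u v ut vt Lu Lv m rho : R) (y1 y2 : R -> R) (t : R) : R := NFf (0) (0) ((4)*(/ a)*(u)^2 + (-8)*(a)*(u)^2 + (-8)*(a)*(/ a)*(u)*(v) + (4)*(a)^2*(/ a)*(u)^2) ((-8)*(/ a)*(u)*(v) + (16)*(a)*(u)*(v) + (8)*(a)*(/ a)*(v)^2 + (-8)*(a)*(/ a)*(u)^2 + (-8)*(a)^2*(/ a)*(u)*(v)) ((4)*(/ a)*(v)^2 + (-8)*(a)*(v)^2 + (8)*(a)*(/ a)*(u)*(v) + (4)*(a)^2*(/ a)*(v)^2) (0) (0) (0) (0) (0) (0) (0) (0) (0) y1 y2 a t.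
Definition FssV (a d1 d2 u v ut vt Lu Lv m rho : R) (y1 y2 : R -> R) : R := NFv (0) (0) ((4)*(/ a)*(u)^2 + (-8)*(a)*(u)^2 + (-8)*(a)*(/ a)*(u)*(v) + (4)*(a)^2*(/ a)*(u)^2) ((-8)*(/ a)*(u)*(v) + (16)*(a)*(u)*(v) + (8)*(a)*(/ a)*(v)^2 + (-8)*(a)*(/ a)*(u)^2 + (-8)*(a)^2*(/ a)*(u)*(v)) ((4)*(/ a)*(v)^2 + (-8)*(a)*(v)^2 + (8)*(a)*(/ a)*(u)*(v) + (4)*(a)^2*(/ a)*(v)^2) (0) (0) (0) (0) (0) (0) (0) (0) (0) y1 y2 a.
Lemma Fss_int (a d1 d2 u v ut vt Lu Lv m rho : R) (y1 y2 : R -> R) : 0 < a -> (forall t, ex_derive y1 t) -> (forall t, ex_derive y2 t) -> @eq R (RInt (fun t => FssN a d1 d2 u v ut vt Lu Lv m rho y1 y2 t) 0 (2*PI/a)) (FssV a d1 d2 u v ut vt Lu Lv m rho y1 y2).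
Proof. move=> Ha H1 H2. rewrite /FssN /FssV. exact: NF_int. Qed.
Lemma B1c_pt a d1 d2 u v ut vt Lu Lv m rho y1 y2 t : Bx true a d1 d2 u v ut vt Lu Lv m rho (y1 t) (y2 t) (cos (a*t)) (sin (a*t)) * cos (a*t) = B1cN a d1 d2 u v ut vt Lu Lv m rho y1 y2 t.
Proof. rewrite /B1cN /NFf /Bx /P01 /P02 /=. ring. Qed.
Lemma B1s_pt a d1 d2 u v ut vt Lu Lv m rho y1 y2 t : Bx true a d1 d2 u v ut vt Lu Lv m rho (y1 t) (y2 t) (cos (a*t)) (sin (a*t)) * sin (a*t) = B1sN a d1 d2 u v ut vt Lu Lv m rho y1 y2 t.
Proof. rewrite /B1sN /NFf /Bx /P01 /P02 /=. ring. Qed.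
Lemma B2c_pt a d1 d2 u v ut vt Lu Lv m rho y1 y2 t : Bx false a d1 d2 u v ut vt Lu Lv m rho (y1 t) (y2 t) (cos (a*t)) (sin (a*t)) * cos (a*t) = B2cN a d1 d2 u v ut vt Lu Lv m rho y1 y2 t.
Proof. rewrite /B2cN /NFf /Bx /P01 /P02 /=. ring. Qed.
Lemma B2s_pt a d1 d2 u v ut vt Lu Lv m rho y1 y2 t : Bx false a d1 d2 u v ut vt Lu Lv m rho (y1 t) (y2 t) (cos (a*t)) (sin (a*t)) * sin (a*t) = B2sN a d1 d2 u v ut vt Lu Lv m rho y1 y2 t.
Proof. rewrite /B2sN /NFf /Bx /P01 /P02 /=. ring. Qed.
Definition dy1 a u v (y1 y2 : R -> R) t := a^2*y1 t + a^2*y2 t + Fx a u v (cos (a*t)) (sin (a*t)).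
Definition dy2 a u v (y1 y2 : R -> R) t := -(1+a^2)*y1 t - a^2*y2 t - Fx a u v (cos (a*t)) (sin (a*t)).
Lemma E1cc_pt a d1 d2 u v ut vt Lu Lv m rho y1 y2 t : dy1 a u v y1 y2 t * cos (a*t)^2 = E1ccN a d1 d2 u v ut vt Lu Lv m rho y1 y2 t.
Proof. rewrite /dy1 /E1ccN /NFf /Fx /P01 /P02 /=. ring. Qed.
Lemma E1cs_pt a d1 d2 u v ut vt Lu Lv m rho y1 y2 t : dy1 a u v y1 y2 t * (cos (a*t)*sin (a*t)) = E1csN a d1 d2 u v ut vt Lu Lv m rho y1 y2 t.
Proof. rewrite /dy1 /E1csN /NFf /Fx /P01 /P02 /=. ring. Qed.
Lemma E1ss_pt a d1 d2 u v ut vt Lu Lv m rho y1 y2 t : dy1 a u v y1 y2 t * sin (a*t)^2 = E1ssN a d1 d2 u v ut vt Lu Lv m rho y1 y2 t.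
Proof. rewrite /dy1 /E1ssN /NFf /Fx /P01 /P02 /=. ring. Qed.
Lemma E2cc_pt a d1 d2 u v ut vt Lu Lv m rho y1 y2 t : dy2 a u v y1 y2 t * cos (a*t)^2 = E2ccN a d1 d2 u v ut vt Lu Lv m rho y1 y2 t.
Proof. rewrite /dy2 /E2ccN /NFf /Fx /P01 /P02 /=. ring. Qed.
Lemma E2cs_pt a d1 d2 u v ut vt Lu Lv m rho y1 y2 t : dy2 a u v y1 y2 t * (cos (a*t)*sin (a*t)) = E2csN a d1 d2 u v ut vt Lu Lv m rho y1 y2 t.
Proof. rewrite /dy2 /E2csN /NFf /Fx /P01 /P02 /=. ring. Qed.
Lemma E2ss_pt a d1 d2 u v ut vt Lu Lv m rho y1 y2 t : dy2 a u v y1 y2 t * sin (a*t)^2 = E2ssN a d1 d2 u v ut vt Lu Lv m rho y1 y2 t.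
Proof. rewrite /dy2 /E2ssN /NFf /Fx /P01 /P02 /=. ring. Qed.
Lemma RInt_ext' (f g : R->R) a b : (forall t, f t = g t) -> @eq R (RInt f a b) (RInt g a b).
Proof. move=> H; apply: RInt_ext => t _; apply: H. Qed.
Lemma gcc_der a t : is_derive (fun t => cos(a*t)^2) t (-(2*a)*(cos(a*t)*sin(a*t))).
Proof. auto_derive; first done. ring. Qed.
Lemma gcs_der a t : is_derive (fun t => cos(a*t)*sin(a*t)) t (a*(cos(a*t)^2 - sin(a*t)^2)).
Proof. auto_derive; first done. ring. Qed.
Lemma gss_der a t : is_derive (fun t => sin(a*t)^2) t ((2*a)*(cos(a*t)*sin(a*t))).
Proof. auto_derive; first done. ring. Qed.
Lemma Jlin_cs a (y : R -> R) : 0 < a -> (forall t, ex_derive y t) -> forall k,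
  @eq R (RInt (fun t => y t * (k*(cos(a*t)*sin(a*t)))) 0 (2*PI/a)) (k * Jcs a y).
Proof.
move=> Ha Hy k. rewrite /Jcs -RInt_scal'; last by exR_tac.
apply: RInt_ext' => t. ring.
Qed.
Lemma Jlin_d a (y : R -> R) : 0 < a -> (forall t, ex_derive y t) ->
  @eq R (RInt (fun t => y t * (a*(cos(a*t)^2 - sin(a*t)^2))) 0 (2*PI/a)) (a * Jcc a y + (- a) * Jss a y).
Proof.
move=> Ha Hy. rewrite /Jcc /Jss -!RInt_scal'; try by exR_tac.
rewrite -RInt_plus'; try by exR_tac.
apply: RInt_ext' => t. ring.
Qed.
Lemma per_c a : 0 < a -> cos (a*(2*PI/a)) = cos (a*0).
Proof. move=> Ha. by rewrite aT // Rmult_0_r cos_2PI cos_0. Qed.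
Lemma per_s a : 0 < a -> sin (a*(2*PI/a)) = sin (a*0).
Proof. move=> Ha. by rewrite aT // Rmult_0_r sin_2PI sin_0. Qed.
Ltac contg := move=> t; apply: cont_of_ex; auto_derive; auto.
Lemma ibp_eqs a d1 d2 u v ut vt Lu Lv m rho (y1 y2 : R -> R) : 0 < a ->
  (forall t, is_derive y1 t (dy1 a u v y1 y2 t)) -> (forall t, is_derive y2 t (dy2 a u v y1 y2 t)) ->
  y1 (2*PI/a) = y1 0 -> y2 (2*PI/a) = y2 0 ->
  let fcc := FccV a d1 d2 u v ut vt Lu Lv m rho y1 y2 in
  let fcs := FcsV a d1 d2 u v ut vt Lu Lv m rho y1 y2 in
  let fss := FssV a d1 d2 u v ut vt Lu Lv m rho y1 y2 in
  let j1cc := Jcc a y1 in let j1cs := Jcs a y1 in let j1ss := Jss a y1 in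
  let j2cc := Jcc a y2 in let j2cs := Jcs a y2 in let j2ss := Jss a y2 in
 a^2*j1cc + a^2*j2cc + fcc = 2*a*j1cs /\
 a^2*j1cs + a^2*j2cs + fcs = -(a*(j1cc - j1ss)) /\
 a^2*j1ss + a^2*j2ss + fss = -(2*a*j1cs) /\
 -(1+a^2)*j1cc - a^2*j2cc - fcc = 2*a*j2cs /\
 -(1+a^2)*j1cs - a^2*j2cs - fcs = -(a*(j2cc - j2ss)) /\
 -(1+a^2)*j1ss - a^2*j2ss - fss = -(2*a*j2cs).
Proof.
move=> Ha D1 D2 P1 P2; cbv zeta.
have ey1 : forall t, ex_derive y1 t by move=> t; eexists; apply: D1.
have ey2 : forall t, ex_derive y2 t by move=> t; eexists; apply: D2.
have C1 : forall t, continuous (dy1 a u v y1 y2) t.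
{ move=> t; apply: cont_of_ex. rewrite /dy1 /Fx /P01 /P02. auto_derive; auto. }
have C2 : forall t, continuous (dy2 a u v y1 y2) t.
{ move=> t; apply: cont_of_ex. rewrite /dy2 /Fx /P01 /P02. auto_derive; auto. }
have Pcc : (fun t => cos(a*t)^2) (2*PI/a) = (fun t => cos(a*t)^2) 0 by rewrite /= per_c.
have Pcs : (fun t => cos(a*t)*sin(a*t)) (2*PI/a) = (fun t => cos(a*t)*sin(a*t)) 0 by rewrite /= per_c // per_s.
have Pss : (fun t => sin(a*t)^2) (2*PI/a) = (fun t => sin(a*t)^2) 0 by rewrite /= per_s.
have Ccc : forall t, continuous (fun t => -(2*a)*(cos(a*t)*sin(a*t))) t by contg.
have Ccs : forall t, continuous (fun t => a*(cos(a*t)^2 - sin(a*t)^2)) t by contg.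
have Css : forall t, continuous (fun t => (2*a)*(cos(a*t)*sin(a*t))) t by contg.
have I1cc := IBP _ _ _ _ _ Ha D1 C1 (gcc_der a) Ccc P1 Pcc.
have I1cs := IBP _ _ _ _ _ Ha D1 C1 (gcs_der a) Ccs P1 Pcs.
have I1ss := IBP _ _ _ _ _ Ha D1 C1 (gss_der a) Css P1 Pss.
have I2cc := IBP _ _ _ _ _ Ha D2 C2 (gcc_der a) Ccc P2 Pcc.
have I2cs := IBP _ _ _ _ _ Ha D2 C2 (gcs_der a) Ccs P2 Pcs.
have I2ss := IBP _ _ _ _ _ Ha D2 C2 (gss_der a) Css P2 Pss.
cbv beta in I1cc, I1cs, I1ss, I2cc, I2cs, I2ss.
rewrite !Jlin_cs // !Jlin_d // in I1cc I1cs I1ss I2cc I2cs I2ss.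
rewrite (RInt_ext' _ _ _ _ (E1cc_pt a d1 d2 u v ut vt Lu Lv m rho y1 y2)) (E1cc_int a d1 d2 u v ut vt Lu Lv m rho y1 y2) // in I1cc.
rewrite (RInt_ext' _ _ _ _ (E1cs_pt a d1 d2 u v ut vt Lu Lv m rho y1 y2)) (E1cs_int a d1 d2 u v ut vt Lu Lv m rho y1 y2) // in I1cs.
rewrite (RInt_ext' _ _ _ _ (E1ss_pt a d1 d2 u v ut vt Lu Lv m rho y1 y2)) (E1ss_int a d1 d2 u v ut vt Lu Lv m rho y1 y2) // in I1ss.
rewrite (RInt_ext' _ _ _ _ (E2cc_pt a d1 d2 u v ut vt Lu Lv m rho y1 y2)) (E2cc_int a d1 d2 u v ut vt Lu Lv m rho y1 y2) // in I2cc.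
rewrite (RInt_ext' _ _ _ _ (E2cs_pt a d1 d2 u v ut vt Lu Lv m rho y1 y2)) (E2cs_int a d1 d2 u v ut vt Lu Lv m rho y1 y2) // in I2cs.
rewrite (RInt_ext' _ _ _ _ (E2ss_pt a d1 d2 u v ut vt Lu Lv m rho y1 y2)) (E2ss_int a d1 d2 u v ut vt Lu Lv m rho y1 y2) // in I2ss.
have K1 : E1ccV a d1 d2 u v ut vt Lu Lv m rho y1 y2 = a^2*(Jcc a y1) + a^2*(Jcc a y2) + (FccV a d1 d2 u v ut vt Lu Lv m rho y1 y2) by rewrite /E1ccV /FccV /NFv; ring.
have K2 : E1csV a d1 d2 u v ut vt Lu Lv m rho y1 y2 = a^2*(Jcs a y1) + a^2*(Jcs a y2) + (FcsV a d1 d2 u v ut vt Lu Lv m rho y1 y2) by rewrite /E1csV /FcsV /NFv; ring.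
have K3 : E1ssV a d1 d2 u v ut vt Lu Lv m rho y1 y2 = a^2*(Jss a y1) + a^2*(Jss a y2) + (FssV a d1 d2 u v ut vt Lu Lv m rho y1 y2) by rewrite /E1ssV /FssV /NFv; ring.
have K4 : E2ccV a d1 d2 u v ut vt Lu Lv m rho y1 y2 = -(1+a^2)*(Jcc a y1) - a^2*(Jcc a y2) - (FccV a d1 d2 u v ut vt Lu Lv m rho y1 y2) by rewrite /E2ccV /FccV /NFv; ring.
have K5 : E2csV a d1 d2 u v ut vt Lu Lv m rho y1 y2 = -(1+a^2)*(Jcs a y1) - a^2*(Jcs a y2) - (FcsV a d1 d2 u v ut vt Lu Lv m rho y1 y2) by rewrite /E2csV /FcsV /NFv; ring.
have K6 : E2ssV a d1 d2 u v ut vt Lu Lv m rho y1 y2 = -(1+a^2)*(Jss a y1) - a^2*(Jss a y2) - (FssV a d1 d2 u v ut vt Lu Lv m rho y1 y2) by rewrite /E2ssV /FssV /NFv; ring.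
rewrite -K1 -K2 -K3 -K4 -K5 -K6 I1cc I1cs I1ss I2cc I2cs I2ss.
repeat split; ring.
Qed.
Lemma iff_aux (E1 E2 R1 R2 ut vt : R) : E1 = R1 - ut -> E2 = R2 - vt ->
  ((E1, E2) = (0, 0) <-> (ut, vt) = (R1, R2)).
Proof.
move=> -> ->. split.
- case=> H1 H2. f_equal; lra.
- case=> <- <-. f_equal; ring.
Qed.
Lemma core n a d1 d2 (r mu : R -> R) (A : Pt n -> R -> C) psi1 x tb :
  0 < a -> smoothC A -> psi1_solution a A psi1 ->
  (solvability a d1 d2 r mu A psi1 x tb <->
   GL_eq a d1 d2 (fun s => RtoC (c2 a * mu s - / r s * Derive r s)) A x tb).
Proof.
move=> Ha SA [Per ODE].
pose y1 := fun t => fst (psi1 t x tb).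
pose y2 := fun t => snd (psi1 t x tb).
pose u := ReF A x tb. pose v := ImF A x tb.
pose ut := pdR Dt (ReF A) x tb. pose vt := pdR Dt (ImF A) x tb.
pose Lu := lapR (ReF A) x tb. pose Lv := lapR (ImF A) x tb.
pose m := mu tb. pose rho := / r tb * Derive r tb.
have D1 : forall t, is_derive y1 t (dy1 a u v y1 y2 t).
{ move=> t. have [e1 [e2 [q1 q2]]] := ODE t x tb.
  have -> : dy1 a u v y1 y2 t = Derive (fun s => fst (psi1 s x tb)) t.
  { rewrite /dy1 /u /v -F_eq /y1 /y2. lra. }
  exact: Derive_correct. }
have D2 : forall t, is_derive y2 t (dy2 a u v y1 y2 t).
{ move=> t. have [e1 [e2 [q1 q2]]] := ODE t x tb.
  have -> : dy2 a u v y1 y2 t = Derive (fun s => snd (psi1 s x tb)) t.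
  { rewrite /dy2 /u /v -F_eq /y1 /y2. lra. }
  exact: Derive_correct. }
have ey1 : forall t, ex_derive y1 t by move=> t; eexists; apply: D1.
have ey2 : forall t, ex_derive y2 t by move=> t; eexists; apply: D2.
have P1 : y1 (2*PI/a) = y1 0 by rewrite /y1 -{1}(Rplus_0_l (2*PI/a)) Per.
have P2 : y2 (2*PI/a) = y2 0 by rewrite /y2 -{1}(Rplus_0_l (2*PI/a)) Per.
have EQ := ibp_eqs a d1 d2 u v ut vt Lu Lv m rho y1 y2 Ha D1 D2 P1 P2.
cbv zeta in EQ.
have Ha0 : a <> 0 by lra.
case: EQ => [H1 [H2 [H3 [H4 [H5 H6]]]]].
have [S1 [S2 [S3 [S4 [S5 S6]]]]] := solve_sys _ _ _ _ _ _ _ _ _ _ Ha0 H1 H2 H3 H4 H5 H6.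
have IB1c : @eq R (RInt (fun t => B2 a d1 d2 r mu A psi1 true t x tb * cos (a*t)) 0 (2*PI/a))
   (B1cV a d1 d2 u v ut vt Lu Lv m rho y1 y2).
{ rewrite -(B1c_int a d1 d2 u v ut vt Lu Lv m rho y1 y2) //.
  apply: RInt_ext' => t. rewrite B2_eq //. exact: B1c_pt. }
have IB1s : @eq R (RInt (fun t => B2 a d1 d2 r mu A psi1 true t x tb * sin (a*t)) 0 (2*PI/a))
   (B1sV a d1 d2 u v ut vt Lu Lv m rho y1 y2).
{ rewrite -(B1s_int a d1 d2 u v ut vt Lu Lv m rho y1 y2) //.
  apply: RInt_ext' => t. rewrite B2_eq //. exact: B1s_pt. }
have IB2c : @eq R (RInt (fun t => B2 a d1 d2 r mu A psi1 false t x tb * cos (a*t)) 0 (2*PI/a))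
   (B2cV a d1 d2 u v ut vt Lu Lv m rho y1 y2).
{ rewrite -(B2c_int a d1 d2 u v ut vt Lu Lv m rho y1 y2) //.
  apply: RInt_ext' => t. rewrite B2_eq //. exact: B2c_pt. }
have IB2s : @eq R (RInt (fun t => B2 a d1 d2 r mu A psi1 false t x tb * sin (a*t)) 0 (2*PI/a))
   (B2sV a d1 d2 u v ut vt Lu Lv m rho y1 y2).
{ rewrite -(B2s_int a d1 d2 u v ut vt Lu Lv m rho y1 y2) //.
  apply: RInt_ext' => t. rewrite B2_eq //. exact: B2s_pt. }
have EA : A x tb = (u, v) by rewrite /u /v /ReF /ImF; case: (A x tb).
have Cm : Cmod (A x tb) ^ 2 = u^2 + v^2.
{ rewrite EA /Cmod pow2_sqrt. - simpl; ring. - simpl; nra. }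
rewrite /solvability /B21 /fourier1. cbv beta.
rewrite IB1c IB1s IB2c IB2s.
rewrite /GL_eq Cm /dtC /lapC EA. cbv beta.
rewrite -/ut -/vt -/Lu -/Lv -/m -/rho.
clearbody u v ut vt Lu Lv m rho y1 y2.
rewrite /Cminus /Cplus /Cmult /RtoC /Copp /phistar /c1 /c3 /c2 /=.
apply: iff_aux.
- rewrite /B1cV /B1sV /B2cV /B2sV /NFv S1 S2 S3 S4 S5 S6 /FccV /FcsV /FssV /NFv.
  have PI0 : PI <> 0 by have := PI_RGT_0; lra.
  field_simplify_eq; [ring| split; done].
- rewrite /B1cV /B1sV /B2cV /B2sV /NFv S1 S2 S3 S4 S5 S6 /FccV /FcsV /FssV /NFv.
  have PI0 : PI <> 0 by have := PI_RGT_0; lra.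
  field_simplify_eq; [ring| split; done].
Qed.
Theorem theorem5p2 :
  forall (a d1 d2 : R) (n : nat), 0 < a -> 0 < d1 -> 0 < d2 -> (1 <= n)%nat ->
  forall (A : Pt n -> R -> C), smoothC A ->
  forall (r mu : R -> R), (forall tb, 0 < r tb) -> (forall tb, ex_derive r tb) ->
  forall (psi1 : R -> Pt n -> R -> R * R), psi1_solution a A psi1 ->
  (* main claim: solvability condition <-> Ginzburg-Landau equation *)
  ((forall x tb, solvability a d1 d2 r mu A psi1 x tb) <->
   (forall x tb, GL_eq a d1 d2 (fun s => RtoC (c2 a * mu s - / r s * Derive r s)) A x tb))
  /\
  (* chart K1: mubar = -1, r' = -1/2 r eps1 *)
  (forall eps1 : R -> R,
     (forall tb, mu tb = -1) -> (forall tb, Derive r tb = - / 2 * r tb * eps1 tb) ->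
     ((forall x tb, solvability a d1 d2 r mu A psi1 x tb) <->
      (forall x tb, GL_eq a d1 d2 (fun s => RtoC (- c2 a + eps1 s / 2)) A x tb)))
  /\
  (* chart K2: r = r2 constant, mu2(t2) = mu2(0) + t2 *)
  (forall mu20 : R,
     (forall tb, Derive r tb = 0) -> (forall tb, mu tb = mu20 + tb) ->
     ((forall x tb, solvability a d1 d2 r mu A psi1 x tb) <->
      (forall x tb, GL_eq a d1 d2 (fun s => RtoC (c2 a * (mu20 + s))) A x tb)))
  /\
  (* chart K3: mubar = 1, r' = 1/2 r eps3 *)
  (forall eps3 : R -> R,
     (forall tb, mu tb = 1) -> (forall tb, Derive r tb = / 2 * r tb * eps3 tb) ->
     ((forall x tb, solvability a d1 d2 r mu A psi1 x tb) <->
      (forall x tb, GL_eq a d1 d2 (fun s => RtoC (c2 a - eps3 s / 2)) A x tb)))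
  /\
  (* explicit solutions of the chart equations for eps1, eps3 *)
  (forall e10 t1, 2 - 4 * e10 * t1 <> 0 ->
     is_derive (fun s => 2 * e10 / (2 - 4 * e10 * s)) t1
               (2 * (2 * e10 / (2 - 4 * e10 * t1)) ^ 2))
  /\
  (forall e30 t3, 2 + 4 * e30 * t3 <> 0 ->
     is_derive (fun s => 2 * e30 / (2 + 4 * e30 * s)) t3
               (- 2 * (2 * e30 / (2 + 4 * e30 * t3)) ^ 2)).
Proof.
move=> a d1 d2 n Ha Hd1 Hd2 Hn A SA r mu Hr Hdr psi1 Hpsi.
have Main : (forall x tb, solvability a d1 d2 r mu A psi1 x tb) <->
   (forall x tb, GL_eq a d1 d2 (fun s => RtoC (c2 a * mu s - / r s * Derive r s)) A x tb).
{ split => H x tb; by apply/(core n a d1 d2 r mu A psi1 x tb Ha SA Hpsi); apply: H. }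
have Hr0 : forall s, r s <> 0 by move=> s; have := Hr s; lra.
split; first exact: Main.
split.
{ move=> eps1 Hm Hd.
  have -> : (fun s => RtoC (- c2 a + eps1 s / 2)) = (fun s => RtoC (c2 a * mu s - / r s * Derive r s)).
  { apply: functional_extensionality => s. rewrite Hm Hd. f_equal. field. exact: Hr0. }
  exact: Main. }
split.
{ move=> mu20 Hd Hm.
  have -> : (fun s => RtoC (c2 a * (mu20 + s))) = (fun s => RtoC (c2 a * mu s - / r s * Derive r s)).
  { apply: functional_extensionality => s. rewrite Hm Hd. f_equal. ring. }
  exact: Main. }
split.
{ move=> eps3 Hm Hd.
  have -> : (fun s => RtoC (c2 a - eps3 s / 2)) = (fun s => RtoC (c2 a * mu s - / r s * Derive r s)).
  { apply: functional_extensionality => s. rewrite Hm Hd. f_equal. field. exact: Hr0. }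
  exact: Main. }
split.
{ move=> e10 t1 H. auto_derive; first done. field. done. }
{ move=> e30 t3 H. auto_derive; first done. field. done. }
Qed.
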